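(* In the setting of a Laplacian consistent coarsening of a connected weighted graph with combinatorial Laplacian $L$, fix a level $\ell$ with contraction family $\mathcal P_\ell=\{\mathcal V_{\ell-1}^{(1)},\dots,\mathcal V_{\ell-1}^{(N_\ell)}\}$ and let $\sigma_\ell=\|S_{\ell-1}\Pi_\ell^\perp A_{\ell-1}\|_2$ (with $A_{\ell-1}$, $S_{\ell-1}$, $\Pi_\ell^\perp$ as defined below). Then $$\sigma_\ell^2\le\sum_{\mathcal C\in\mathcal P_\ell}\|\Pi_{\mathcal C}^\perp A_{\ell-1}\|_{L_{\mathcal C}}^2,$$ where $\|M\|_{L_{\mathcal C}}:=\|L_{\mathcal C}^{1/2}M\|_2$ (spectral norm).
   Context: Laplacian consistent coarsening: $G_0=G$, $L_0=L$; at each level $\ell$ a surjective map $\varphi_\ell:\mathcal V_{\ell-1}\to\mathcal V_\ell=\{v'_1,\dots,v'_{N_\ell}\}$ defines contraction sets $\mathcal V_{\ell-1}^{(r)}=\varphi_\ell^{-1}(v'_r)$, each inducing a connected subgraph of $G_{\ell-1}$; $P_\ell(r,i)=1/|\mathcal V_{\ell-1}^{(r)}|$ if $v_i\in\mathcal V_{\ell-1}^{(r)}$, else $0$; $P_\ell^+(i,r)=1$ if $v_i\in\mathcal V_{\ell-1}^{(r)}$, else $0$; $L_\ell=(P_\ell^+)^\top L_{\ell-1}P_\ell^+$, the Laplacian of $G_\ell$ with weight matrix $W_\ell$. $\Pi_\ell^\perp=I-P_\ell^+P_\ell$ and $L_{\ell-1}=S_{\ell-1}^\top S_{\ell-1}$.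 Given a $k$-dimensional subspace $\mathbf R\subseteq\mathbb R^N$ with orthonormal basis $V$: $A_0=B_0=VV^\top L^{+1/2}$ and, for $\ell\ge2$, $B_{\ell-1}=P_{\ell-1}B_{\ell-2}$, $A_{\ell-1}=B_{\ell-1}(B_{\ell-1}^\top L_{\ell-1}B_{\ell-1})^{+1/2}$ ($M^{+1/2}$ is the pseudoinverse of the PSD square root). For a vertex set $\mathcal C\subseteq\mathcal V_{\ell-1}$: $\Pi_{\mathcal C}^\perp$ is the $N_{\ell-1}\times N_{\ell-1}$ matrix with $[\Pi_{\mathcal C}^\perp x](i)=x(i)-\frac{1}{|\mathcal C|}\sum_{v_j\in\mathcal C}x(j)$ if $v_i\in\mathcal C$ and $0$ otherwise; $L_{\mathcal C}$ is the $N_{\ell-1}\times N_{\ell-1}$ combinatorial Laplacian with weights $W_{\mathcal C}(i,j)=W_{\ell-1}(i,j)$ if $v_i,v_j\in\mathcal C$, $W_{\mathcal C}(i,j)=2W_{\ell-1}(i,j)$ if exactly one of $v_i,v_j$ is in $\mathcal C$, and $0$ otherwise. *)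

(* Defs.v *)
From HB Require Import structures.
From mathcomp Require Import all_boot all_order all_algebra.
From Stdlib Require Import ClassicalEpsilon.
Set Implicit Arguments. Unset Strict Implicit. Unset Printing Implicit Defensive.
Import Order.TTheory GRing.Theory Num.Theory.
Local Open Scope ring_scope.

Definition sqnorm (R : rcfType) n (x : 'cV[R]_n) : R := \sum_(i < n) x i 0 ^+ 2.

Definition is_spectral_norm (R : rcfType) m n (M : 'M[R]_(m, n)) (s : R) : Prop :=
  [/\ 0 <= s,
      (forall x : 'cV[R]_n, sqnorm (M *m x) <= s ^+ 2 * sqnorm x) &
      (forall c : R, 0 <= c ->
         (forall x : 'cV[R]_n, sqnorm (M *m x) <= c ^+ 2 * sqnorm x) -> s <= c)].

Definition psd (R : rcfType) n (M : 'M[R]_n) : Prop :=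
  M^T = M /\ forall x : 'cV[R]_n, 0 <= (x^T *m M *m x) 0 0.

Definition is_psd_sqrt (R : rcfType) n (M X : 'M[R]_n) : Prop :=
  psd X /\ X *m X = M.

Definition is_pinv (R : rcfType) n (X Y : 'M[R]_n) : Prop :=
  [/\ X *m Y *m X = X, Y *m X *m Y = Y, (X *m Y)^T = X *m Y & (Y *m X)^T = Y *m X].

Definition is_pinv_psd_sqrt (R : rcfType) n (M Y : 'M[R]_n) : Prop :=
  exists X, is_psd_sqrt M X /\ is_pinv X Y.

Definition pinv_psd_sqrt (R : rcfType) n (M : 'M[R]_n) : 'M[R]_n :=
  epsilon (inhabits (0 : 'M[R]_n)) (is_pinv_psd_sqrt M).

Definition is_Lnorm (R : rcfType) n m (L : 'M[R]_n) (M : 'M[R]_(n, m)) (s : R) : Prop :=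
  exists X, is_psd_sqrt L X /\ is_spectral_norm (X *m M) s.

Definition is_weight_matrix (R : rcfType) n (W : 'M[R]_n) : Prop :=
  [/\ W^T = W, (forall i j, 0 <= W i j) & (forall i, W i i = 0)].

Definition lap (R : rcfType) n (W : 'M[R]_n) : 'M[R]_n :=
  \matrix_(i, j) ((i == j)%:R * (\sum_(k < n) W i k) - W i j).

Definition induces_connected (R : rcfType) n (W : 'M[R]_n) (C : {set 'I_n}) : Prop :=
  forall i j, i \in C -> j \in C ->
    connect [rel a b | [&& a \in C, b \in C & 0 < W a b]] i j.

(* ---------- the coarsening hierarchy ----------
   N k = N_k (number of vertices at level k), phi k = varphi_{k+1} : V_k -> V_{k+1}. *)
Section Coarsening.
Variables (R : rcfType) (N : nat -> nat) (phi : forall k, 'I_(N k) -> 'I_(N k.+1)).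

Definition clus k (r : 'I_(N k.+1)) : {set 'I_(N k)} := [set i | phi i == r].

Definition Pmat k : 'M[R]_(N k.+1, N k) :=
  \matrix_(r, i) (if phi i == r then (#|clus r|%:R)^-1 else 0).

Definition Pplus k : 'M[R]_(N k, N k.+1) :=
  \matrix_(i, r) (phi i == r)%:R.

Variable W : 'M[R]_(N 0).

Fixpoint Lev k : 'M[R]_(N k) :=
  match k with
  | 0 => lap W
  | k'.+1 => (Pplus k')^T *m Lev k' *m Pplus k'
  end.

Definition Wlev k : 'M[R]_(N k) :=
  \matrix_(i, j) (if i == j then 0 else - Lev k i j).

Definition Piperp k : 'M[R]_(N k) := 1%:M - Pplus k *m Pmat k.

Variables (d : nat) (V : 'M[R]_(N 0, d)).

Definition B0 : 'M[R]_(N 0, N 0) := V *m V^T *m pinv_psd_sqrt (lap W).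

Fixpoint Bmat k : 'M[R]_(N k, N 0) :=
  match k with
  | 0 => B0
  | k'.+1 => Pmat k' *m Bmat k'
  end.

Definition Amat k : 'M[R]_(N k, N 0) :=
  match k as k0 return 'M[R]_(N k0, N 0) with
  | 0 => B0
  | k'.+1 => Bmat k'.+1 *m
             pinv_psd_sqrt ((Bmat k'.+1)^T *m Lev k'.+1 *m Bmat k'.+1)
  end.

End Coarsening.

Definition PiC (R : rcfType) n (C : {set 'I_n}) : 'M[R]_n :=
  \matrix_(i, j) (if i \in C then (i == j)%:R - (j \in C)%:R / #|C|%:R else 0).

Definition WC (R : rcfType) n (W : 'M[R]_n) (C : {set 'I_n}) : 'M[R]_n :=
  \matrix_(i, j) (if (i \in C) && (j \in C) then W i j
                  else if (i \in C) (+) (j \in C) then 2 * W i j else 0).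

Definition LC (R : rcfType) n (W : 'M[R]_n) (C : {set 'I_n}) : 'M[R]_n :=
  lap (WC W C).

(* Main.v *)
Require Import Defs.
From HB Require Import structures.
From mathcomp Require Import all_boot all_order all_algebra ring lra.
Import Order.TTheory GRing.Theory Num.Theory.
Local Open Scope ring_scope.
Set Implicit Arguments. Unset Strict Implicit.
Section Gen.
Variables (R : rcfType) (n : nat).

Definition qf (M : 'M[R]_n) (x : 'cV[R]_n) := (x^T *m M *m x) 0 0.

Lemma qfE M x : qf M x = \sum_i \sum_j x i 0 * M i j * x j 0.
Proof.
rewrite /qf mxE.
under eq_bigr => j _ do rewrite mxE big_distrl /=.
rewrite exchange_big /=; apply: eq_bigr => i _; apply: eq_bigr => j _.
by rewrite !mxE.
Qed.

Lemma sqnorm_qf m (S : 'M[R]_(m, n)) x : sqnorm (S *m x) = qf (S^T *m S) x.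
Proof.
rewrite /qf mulmxA -trmx_mul -mulmxA [in RHS]mxE /sqnorm.
rewrite [X in _ = X](eq_bigr (fun i => (S *m x) i 0 ^+ 2)) // => i _.
by rewrite !mxE expr2.
Qed.

Lemma lap_qf (W' : 'M[R]_n) x : (forall i j, W' i j = W' j i) ->
  2 * qf (lap W') x = \sum_i \sum_j W' i j * (x i 0 - x j 0) ^+ 2.
Proof.
move=> sym.
have E1 : qf (lap W') x = \sum_i \sum_j (W' i j * x i 0 ^+ 2 - x i 0 * W' i j * x j 0).
  rewrite qfE; apply: eq_bigr => i _.
  under eq_bigr => j _ do rewrite mxE mulrBr mulrBl.
  rewrite sumrB [in RHS]sumrB; congr (_ - _).
  set S := \sum_(k < n) W' i k.
  rewrite (bigD1 i) //= eqxx big1 ?addr0; last first.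
    by move=> j ji; rewrite eq_sym (negbTE ji) !mul0r mulr0 mul0r.
  rewrite /S -big_distrl /=; ring.
have E2 : \sum_i \sum_j W' i j * (x i 0 - x j 0) ^+ 2 =
   \sum_i \sum_j (W' i j * x i 0 ^+ 2 - x i 0 * W' i j * x j 0) +
   \sum_i \sum_j (W' i j * x j 0 ^+ 2 - x i 0 * W' i j * x j 0).
  rewrite -big_split /=; apply: eq_bigr => i _; rewrite -big_split /=.
  by apply: eq_bigr => j _; ring.
rewrite E2 E1 [X in _ = _ + X]exchange_big /=.
rewrite [X in _ = _ + X](eq_bigr (fun j => \sum_i (W' j i * x j 0 ^+ 2 - x j 0 * W' j i * x i 0))); first by ring.
move=> j _; apply: eq_bigr => i _; rewrite (sym i j); ring.
Qed.

End Gen.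
Section Lev.
Variables (R : rcfType) (N : nat -> nat) (phi : forall k, 'I_(N k) -> 'I_(N k.+1))
  (W : 'M[R]_(N 0)).
Hypothesis Ww : is_weight_matrix W.

Lemma Lev_succE k r s : Lev phi W k.+1 r s =
  \sum_j (\sum_i (@phi k i == r)%:R * Lev phi W k i j) * (@phi k j == s)%:R.
Proof.
rewrite /= mxE; apply: eq_bigr => j _; rewrite !mxE; congr (_ * _).
by apply: eq_bigr => i _; rewrite !mxE.
Qed.

Lemma Lev_props k : [/\ forall i j, Lev phi W k i j = Lev phi W k j i,
  forall i, \sum_j Lev phi W k i j = 0 &
  forall i j, i != j -> Lev phi W k i j <= 0].
Proof.
case: Ww => WT W0 Wd.
have Wsym : forall i j, W i j = W j i by move=> i j; rewrite -{1}WT mxE.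
elim: k => [|k [IHs IHr IHo]].
  split.
  - move=> i j; rewrite /= !mxE; case: (eqVneq i j) => [->//|ij].
    by rewrite !mul0r (Wsym i j).
  - move=> i /=; under eq_bigr => j _ do rewrite mxE.
    rewrite sumrB; set S := \sum_(k < N 0) W i k.
    rewrite (bigD1 i) //= eqxx big1 ?addr0 ?mul1r ?subrr //.
    by move=> j ji; rewrite eq_sym (negbTE ji) mul0r.
  - by move=> i j ij; rewrite /= mxE (negbTE ij) mul0r sub0r oppr_le0.
split.
- move=> r s; rewrite !Lev_succE.
  under eq_bigr => j _ do rewrite big_distrl /=.
  under [RHS]eq_bigr => j _ do rewrite big_distrl /=.
  rewrite [RHS]exchange_big /=; apply: eq_bigr => j _; apply: eq_bigr => i _.
  rewrite IHs; ring.
- move=> r; under eq_bigr => s _ do rewrite Lev_succE.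
  rewrite exchange_big /=.
  have E1 : forall j, \sum_s (@phi k j == s)%:R = 1 :> R.
    move=> j; rewrite (bigD1 (@phi k j)) //= eqxx big1 ?addr0 // => s.
    by rewrite eq_sym => /negbTE ->.
  under eq_bigr => j _ do rewrite -big_distrr /= E1 mulr1.
  rewrite exchange_big /=; apply: big1 => i _.
  by rewrite -big_distrr /= IHr mulr0.
- move=> r s rs; rewrite Lev_succE; apply: sumr_le0 => j _.
  case: (eqVneq (@phi k j) s) => [ejs|]; last by rewrite mulr0.
  rewrite mulr1; apply: sumr_le0 => i _.
  case: (eqVneq (@phi k i) r) => [eir|]; last by rewrite mul0r.
  rewrite mul1r; apply: IHo; apply/eqP => eij.
  by move: rs; rewrite -eir -ejs eij eqxx.
Qed.

Lemma lap_Wlev k : lap (Wlev phi W k) = Lev phi W k.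
Proof.
have [Ls Lr Lo] := Lev_props k.
apply/matrixP => i j; rewrite !mxE.
have E : \sum_m Wlev phi W k i m = Lev phi W k i i.
  have := Lr i; rewrite (bigD1 i) //= => H.
  rewrite (bigD1 i) //= !mxE eqxx add0r.
  transitivity (- \sum_(m < N k | m != i) Lev phi W k i m); last first.
    by apply/eqP; rewrite eq_sym -addr_eq0 H.
  rewrite -sumrN; apply: eq_bigr => m mi; rewrite mxE eq_sym (negbTE mi) //.
rewrite E; case: (eqVneq i j) => [->|ij].
  by rewrite subr0 mul1r.
by rewrite (mul0r (Lev phi W k i i)) sub0r opprK.
Qed.

Lemma Wlev_sym k i j : Wlev phi W k i j = Wlev phi W k j i.
Proof.
have [Ls _ _] := Lev_props k.
by rewrite !mxE eq_sym Ls.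
Qed.

Lemma Wlev_ge0 k i j : 0 <= Wlev phi W k i j.
Proof.
have [_ _ Lo] := Lev_props k.
rewrite mxE; case: (eqVneq i j) => // ij.
by rewrite oppr_ge0 Lo.
Qed.

Lemma Piperp_entry k (y : 'cV[R]_(N k)) i : (Piperp R phi k *m y) i 0 =
  y i 0 - \sum_j ((@phi k j == @phi k i)%:R / #|clus phi (@phi k i)|%:R * y j 0).
Proof.
rewrite /Piperp mulmxBl mul1mx !mxE; congr (_ - _); apply: eq_bigr => j _.
rewrite !mxE; congr (_ * _).
rewrite (bigD1 (@phi k i)) //= big1 ?addr0; last first.
  by move=> r ri; rewrite !mxE eq_sym (negbTE ri) mul0r.
rewrite !mxE eqxx mul1r.
by case: (@phi k j == @phi k i); rewrite ?mul1r ?mul0r.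
Qed.

Lemma PiC_entry k (r : 'I_(N k.+1)) (y : 'cV[R]_(N k)) i :
  (PiC R (clus phi r) *m y) i 0 = (@phi k i == r)%:R * (Piperp R phi k *m y) i 0.
Proof.
rewrite Piperp_entry mxE; under eq_bigr => j _ do rewrite mxE.
rewrite inE; case: (eqVneq (@phi k i) r) => [<-|ne]; last first.
  by rewrite mul0r big1 // => j _; rewrite mul0r.
rewrite mul1r; under eq_bigr => j _ do rewrite mulrBl.
rewrite sumrB; congr (_ - _).
  rewrite (bigD1 i) //= eqxx mul1r big1 ?addr0 // => j ji.
  by rewrite eq_sym (negbTE ji) mul0r.
by apply: eq_bigr => j _; rewrite inE.
Qed.

End Lev.
Section Main.
Variables (R : rcfType) (N : nat -> nat) (phi : forall k, 'I_(N k) -> 'I_(N k.+1))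
  (W : 'M[R]_(N 0)).
Hypothesis Ww : is_weight_matrix W.

Lemma WC_sym k (C : {set 'I_(N k)}) i j :
  WC (Wlev phi W k) C i j = WC (Wlev phi W k) C j i.
Proof. by rewrite [LHS]mxE [RHS]mxE andbC addbC (Wlev_sym phi Ww). Qed.

Lemma main_ineq k (y : 'cV[R]_(N k)) :
  qf (Lev phi W k) (Piperp R phi k *m y) <=
  \sum_r qf (LC (Wlev phi W k) (clus phi r)) (PiC R (clus phi r) *m y).
Proof.
rewrite -(ler_pM2l (_ : 0 < 2 :> R)) // mulr_sumr.
rewrite -{1}(lap_Wlev phi Ww) lap_qf; last by move=> i j; exact: (Wlev_sym phi Ww).
under [X in _ <= X]eq_bigr => r _ do rewrite /LC (lap_qf _ (fun i j => WC_sym (clus phi r) i j)).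
rewrite [X in _ <= X]exchange_big /=; apply: ler_sum => i _.
rewrite [X in _ <= X]exchange_big /=; apply: ler_sum => j _.
set z := Piperp R phi k *m y.
under eq_bigr => r _ do rewrite !(PiC_entry phi) -/z [WC _ _ _ _]mxE !inE.
have w0 := Wlev_ge0 phi Ww i j.
set w := Wlev phi W k i j.
have F0 : forall r : 'I_(N k.+1), 0 <=
  (if (@phi k i == r) && (@phi k j == r) then w
   else if (@phi k i == r) (+) (@phi k j == r) then 2 * w else 0) *
  ((@phi k i == r)%:R * z i 0 - (@phi k j == r)%:R * z j 0) ^+ 2.
  move=> r; apply: mulr_ge0; last exact: sqr_ge0.
  by case: ifP => // _; case: ifP => // _; apply: mulr_ge0.
case: (eqVneq (@phi k i) (@phi k j)) => [e|ne].
  rewrite (bigD1 (@phi k j)) //= e eqxx /= !mul1r.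
  by rewrite lerDl; apply: sumr_ge0 => r _; have := F0 r; rewrite e.
rewrite (bigD1 (@phi k i)) //= (bigD1 (@phi k j)) //= ?eqxx; last by rewrite eq_sym.
rewrite eq_sym (negbTE ne) /=.
have S0 : 0 <= \sum_(r < N k.+1 | (r != @phi k i) && (r != @phi k j))
      (if (@phi k i == r) && (@phi k j == r) then w
       else if (@phi k i == r) (+) (@phi k j == r) then 2 * w else 0) *
      ((@phi k i == r)%:R * z i 0 - (@phi k j == r)%:R * z j 0) ^+ 2.
  by apply: sumr_ge0 => r _.
move: S0; set s := \sum_(_ < _ | _) _ => S0.
rewrite -subr_ge0.
set t := (X in 0 <= X).
have -> : t = w * (z i 0 + z j 0) ^+ 2 + s by rewrite /t; ring.
by rewrite addr_ge0 // mulr_ge0 // sqr_ge0.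
Qed.
End Main.
Unset Implicit Arguments.

(* Level ell = l.+1; level ell-1 = l. *)
Theorem proposition5 (R : rcfType) (N : nat -> nat)
  (phi : forall k, 'I_(N k) -> 'I_(N k.+1))
  (W : 'M[R]_(N 0)) (d : nat) (V : 'M[R]_(N 0, d)) (l : nat) :
  is_weight_matrix W ->
  induces_connected W setT ->
  (forall k, (k <= l)%N -> forall r : 'I_(N k.+1), exists i, phi k i = r) ->
  (forall k, (k <= l)%N -> forall r : 'I_(N k.+1),
     induces_connected (Wlev phi W k) (clus phi r)) ->
  V^T *m V = 1%:M ->
  forall (p : nat) (S : 'M[R]_(p, N l)),
  S^T *m S = Lev phi W l ->
  forall sigma : R,
  is_spectral_norm (S *m Piperp R phi l *m Amat phi W V l) sigma ->
  forall nC : 'I_(N l.+1) -> R,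
  (forall r, is_Lnorm (LC (Wlev phi W l) (clus phi r))
                      (PiC R (clus phi r) *m Amat phi W V l) (nC r)) ->
  sigma ^+ 2 <= \sum_(r < N l.+1) nC r ^+ 2.
Proof.
move=> Ww _ _ _ _ p S SL sigma [sg0 _ sgmin] nC HnC.
have s0 : 0 <= \sum_(r < N l.+1) nC r ^+ 2 by apply: sumr_ge0 => r _; exact: sqr_ge0.
set c := Num.sqrt (\sum_(r < N l.+1) nC r ^+ 2).
have le : sigma <= c.
  apply: sgmin; first exact: sqrtr_ge0.
  move=> x; rewrite sqr_sqrtr // mulr_suml.
  set A := Amat phi W V l.
  rewrite -!mulmxA sqnorm_qf SL.
  apply: le_trans (main_ineq phi Ww (A *m x)) _.
  apply: ler_sum => r _.
  have [X [[[XT _] XX] [_ Hb _]]] := HnC r.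
  have := Hb x; rewrite -!mulmxA sqnorm_qf XT XX //.
rewrite -(sqr_sqrtr s0) -/c !expr2.
by apply: ler_pM.
Qed.
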